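(* Let $m$ be a nonzero non-unit element of a unique factorization domain $D$ with identity $e$. Then $\mathrm{Sep}(J(m))=\{k\in D: \gcd(k,m)\sim e\}$.
   Context: $J(m)=mD$, regarded as an ideal of the multiplicative semigroup $D_{mult}$; $\sim$ is the associate relation. For a subset $A$ of a semigroup $S$ (here $S=D_{mult}$): $\mathrm{Id}\,A=\{x\in S: xA\subseteq A,\ Ax\subseteq A\}$ and $\mathrm{Sep}\,A=\mathrm{Id}\,A\cap\mathrm{Id}(S\setminus A)$. *)

(* Defs.v *)
From HB Require Import structures.
From mathcomp Require Import all_boot all_order all_algebra.
Set Implicit Arguments. Unset Strict Implicit. Unset Printing Implicit Defensive.
Import GRing.Theory.
Local Open Scope ring_scope.

Section UFDDefs.
Variable D : idomainType.

Definition dvd (a b : D) : Prop := exists c : D, b = a * c.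
Definition assoc (a b : D) : Prop := dvd a b /\ dvd b a.

Definition irreducible_elt (p : D) : Prop :=
  p != 0 /\ p \isn't a GRing.unit /\
  forall a b : D, p = a * b -> a \is a GRing.unit \/ b \is a GRing.unit.

Definition UFD : Prop :=
  (forall x : D, x != 0 -> x \isn't a GRing.unit ->
     exists s : seq D, (forall p, p \in s -> irreducible_elt p) /\
                       x = \prod_(p <- s) p) /\
  (forall s t : seq D,
     (forall p, p \in s -> irreducible_elt p) ->
     (forall p, p \in t -> irreducible_elt p) ->
     \prod_(p <- s) p = \prod_(p <- t) p ->
     exists t' : seq D, perm_eq t t' /\ size s = size t' /\
       forall i, (i < size s)%N -> assoc (nth 0 s i) (nth 0 t' i)).

Definition is_gcd (d a b : D) : Prop :=
  dvd d a /\ dvd d b /\ forall c, dvd c a -> dvd c b -> dvd c d.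

Definition J (m : D) : D -> Prop := fun y => exists c : D, y = m * c.

Definition IdS (A : D -> Prop) : D -> Prop :=
  fun x => (forall a, A a -> A (x * a)) /\ (forall a, A a -> A (a * x)).

Definition Sep (A : D -> Prop) : D -> Prop :=
  fun x => IdS A x /\ IdS (fun y => ~ A y) x.

End UFDDefs.

(* Main.v *)
Require Import Defs.
From mathcomp Require Import all_boot all_order all_algebra.
From Stdlib Require Import Classical.
Import GRing.Theory.
Local Open Scope ring_scope.

Section Aux.
Variable D : idomainType.

Lemma unit_of_dvd1 (x : D) : Defs.dvd x 1 -> x \is a GRing.unit.
Proof. move=> [c Hc]; apply/unitrPr; exists c; by rewrite -Hc. Qed.

Lemma dvd_prod (p : D) (s : seq D) : p \in s -> Defs.dvd p (\prod_(q <- s) q).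
Proof.
elim: s => [|a s IH] //=; rewrite in_cons big_cons => /orP [/eqP -> | /IH [c ->]].
  by exists (\prod_(q <- s) q).
by exists (a * c); rewrite mulrCA.
Qed.

Lemma nonunit_nil (s : seq D) (x : D) : x \isn't a GRing.unit ->
  x = \prod_(p <- s) p -> s <> [::].
Proof. move=> Hu Hx Hs; subst; move: Hu; by rewrite big_nil unitr1. Qed.

Lemma euclid (hD : UFD D) (p a b : D) : irreducible_elt p -> Defs.dvd p (a * b) ->
  Defs.dvd p a \/ Defs.dvd p b.
Proof.
move=> Hp [c Hc]; have [Hp0 [Hpu Hpi]] := Hp.
have [->|a0] := eqVneq a 0; first by left; exists 0; rewrite mulr0.
have [->|b0] := eqVneq b 0; first by right; exists 0; rewrite mulr0.
have [au|anu] := boolP (a \is a GRing.unit).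
  right; exists (a^-1 * c); by rewrite mulrCA -Hc mulKr.
have [bu|bnu] := boolP (b \is a GRing.unit).
  left; exists (c * b^-1); by rewrite mulrA -Hc mulrK.
have [cu|cnu] := boolP (c \is a GRing.unit).
  have : p = a * (b * c^-1) by rewrite mulrA Hc mulrK.
  move/Hpi => [] H; [by rewrite H in anu|].
  by move: H; rewrite unitrMl ?unitrV // => H; rewrite H in bnu.
have c0 : c != 0.
  apply/eqP => c0; move: Hc; rewrite c0 mulr0 => /eqP; by rewrite mulf_eq0 (negPf a0) (negPf b0).
have [[s [Hs1 Hs2]] [[t [Ht1 Ht2]] [[u [Hu1 Hu2]] _]]] :
  (exists s : seq D, (forall q, q \in s -> irreducible_elt q) /\ a = \prod_(q <- s) q) /\
  (exists s : seq D, (forall q, q \in s -> irreducible_elt q) /\ b = \prod_(q <- s) q) /\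
  (exists s : seq D, (forall q, q \in s -> irreducible_elt q) /\ c = \prod_(q <- s) q) /\ True.
  by split; [|split; [|split]]; try apply hD.1.
have Hprod : \prod_(q <- p :: u) q = \prod_(q <- s ++ t) q.
  by rewrite big_cons big_cat /= -Hu2 -Hs2 -Ht2 Hc.
have H1 : forall q, q \in p :: u -> irreducible_elt q.
  by move=> q; rewrite in_cons => /orP [/eqP ->|/Hu1].
have H2 : forall q, q \in s ++ t -> irreducible_elt q.
  by move=> q; rewrite mem_cat => /orP [/Hs1|/Ht1].
have [t' [Hperm [Hsz Has]]] := hD.2 _ _ H1 H2 Hprod.
have := Has 0%N isT; rewrite /= => [[Hpq _]].
have : nth 0 t' 0 \in s ++ t.
  rewrite (perm_mem Hperm) mem_nth //.
  by rewrite -Hsz.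
rewrite mem_cat => /orP [] Hq.
  left; move: (dvd_prod _ _ Hq); rewrite -Hs2 => [[e He]]; move: Hpq => [f Hf].
  by exists (f * e); rewrite He Hf mulrA.
right; move: (dvd_prod _ _ Hq); rewrite -Ht2 => [[e He]]; move: Hpq => [f Hf].
by exists (f * e); rewrite He Hf mulrA.
Qed.

Lemma key (hD : UFD D) (s : seq D) (k : D) :
  (forall p, p \in s -> irreducible_elt p) ->
  (forall p, p \in s -> ~ Defs.dvd p k) ->
  forall y, Defs.dvd (\prod_(q <- s) q) (k * y) -> Defs.dvd (\prod_(q <- s) q) y.
Proof.
elim: s => [|p s IH] Hirr Hnd y.
  by rewrite big_nil => _; exists y; rewrite mul1r.
rewrite big_cons => [[c Hc]].
have Hp : irreducible_elt p by apply Hirr; rewrite mem_head.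
have : Defs.dvd p (k * y) by exists (\prod_(q <- s) q * c); rewrite Hc mulrA.
move/(euclid hD _ _ _ Hp) => [] Hd.
  by exfalso; apply: (Hnd p) => //; rewrite mem_head.
move: Hd => [y' Hy']; subst y.
have Hp0 : p != 0 by case: Hp.
have : k * y' = \prod_(q <- s) q * c.
  apply: (mulfI Hp0); by rewrite mulrCA Hc mulrA.
move=> Hk.
have [e He] : Defs.dvd (\prod_(q <- s) q) y'.
  apply: IH.
  - by move=> q Hq; apply Hirr; rewrite in_cons Hq orbT.
  - by move=> q Hq; apply Hnd; rewrite in_cons Hq orbT.
  - by exists c.
by exists e; rewrite He mulrA.
Qed.

End Aux.

Theorem corollary1 (D : idomainType) (hD : UFD D) (m : D)
  (hm0 : m != 0) (hmu : m \isn't a GRing.unit) :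
  forall k : D, Sep (J m) k <-> exists d : D, is_gcd d k m /\ assoc d 1.
Proof.
move=> k; split.
- move=> [_ [Hl _]].
  exists 1; split; last by split; exists 1; rewrite mulr1.
  split; first by exists k; rewrite mul1r.
  split; first by exists m; rewrite mul1r.
  move=> c [k' Hk] [c' Hm].
  have [HJ|Hn] := Classical_Prop.classic (J m c'); last first.
    exfalso; apply: (Hl c' Hn); exists k'.
    by rewrite Hk Hm mulrAC mulrC.
  move: HJ => [e He].
  exists e; apply: (mulfI hm0); rewrite mulr1 {1}Hm He.
  by rewrite mulrCA.
- move=> [d [[Hdk [Hdm Hdc]] [Hd1 _]]].
  have [s [Hs1 Hs2]] := hD.1 m hm0 hmu.
  have HK : forall a, J m (k * a) -> J m a.
    move=> a [c Hc].
    have := @key D hD s k Hs1 _ a.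
    rewrite -Hs2 => H; apply: H; last by exists c.
    move=> p Hp Hpk.
    have Hpm : Defs.dvd p m by rewrite Hs2; apply: (@dvd_prod D).
    have [e He] := Hdc p Hpk Hpm.
    move: Hd1 => [f Hf].
    have : p \is a GRing.unit by apply: unit_of_dvd1; exists (e * f); rewrite Hf He mulrA.
    by have [_ [Hpu _]] := Hs1 p Hp; move/negP: Hpu.
  split; split.
  + by move=> a [c ->]; exists (k * c); rewrite mulrCA.
  + by move=> a [c ->]; exists (c * k); rewrite mulrA.
  + by move=> a Ha Hka; apply: Ha; apply: HK.
  + by move=> a Ha Hka; apply: Ha; apply: HK; rewrite mulrC.
Qed.
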